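(* Let $N=6$, $k=3$, $T=2$, $p_{11}=0.3$, $p_{01}=0.5$ (so $p_{11}<p_{01}$), and initial beliefs $(\omega_1,\dots,\omega_6)=(0.99,0.5,0.4,0.39,0.25,0.25)$. Consider the policy that senses channels $\{1,2,4\}$ in slot $1$ and, in slot $2$, senses three channels with the largest updated beliefs. Its expected total reward over the two slots is strictly larger than that of the myopic sensing policy, which senses $\{1,2,3\}$ in slot $1$ and three channels with the largest updated beliefs in slot $2$. In particular, the myopic sensing policy is not optimal in this instance.
   Context: Opportunistic spectrum access model. There are $N$ channels. The state $S_i(t)\in\{0,1\}$ of channel $i$ in slot $t$ (0 = busy, 1 = idle) evolves as a two-state discrete-time Markov chain with transition probabilities $p_{ij}=\Pr(S_i(t+1)=j\mid S_i(t)=i)$. The chains are independent across channels and all have the same transition probabilities $p_{01},p_{11}$. The initial states are independent with $\Pr(S_i(1)=1)=\omega_i$. In each slot, a user senses a set of exactly $k$ channels, chosen based on past actions and observations. It observes their states and obtains reward $1$ if at least one sensed channel is idle, and reward $0$ otherwise. The objective is the expected total reward over $T$ slots. Beliefs $\omega_i(t)$ (conditional probability that channel $i$ is idle in slot $t$) update as follows: $\omega_i(t+1)=p_{11}$ if $i$ was sensed and found idle; $\omega_i(t+1)=p_{01}$ if $i$ was sensed and found busy; and $\omega_i(t+1)=\tau(\omega_i(t))$ if $i$ was not sensed, where $\tau(\omega)=\omega p_{11}+(1-\omega)p_{01}$. The myopic sensing policy senses, in each slot, $k$ channels with the largest current beliefs. A policy is optimal if it maximizes the expected total reward. *)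

(* Defs.v *)
From HB Require Import structures.
From mathcomp Require Import all_boot all_order all_algebra.
Set Implicit Arguments. Unset Strict Implicit. Unset Printing Implicit Defensive.
Import Order.TTheory GRing.Theory Num.Theory.
Local Open Scope ring_scope.

Section OSA.
Variable N : nat.

(* channel states in one slot: true = idle (1), false = busy (0) *)
Definition state := {ffun 'I_N -> bool}.
Definition obs := {ffun 'I_N -> option bool}.
Definition beliefs := 'I_N -> rat.

Definition tau (p01 p11 w : rat) : rat := w * p11 + (1 - w) * p01.

Definition prob_state (w : beliefs) (s : state) : rat :=
  \prod_(i < N) (if s i then w i else 1 - w i).

Definition observe (A : {set 'I_N}) (s : state) : obs :=
  [ffun i => if i \in A then Some (s i) else None].

Definition update (p01 p11 : rat) (w : beliefs) (A : {set 'I_N}) (s : state)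
  : beliefs :=
  fun i => if i \in A then (if s i then p11 else p01) else tau p01 p11 (w i).

Definition exp_reward (w : beliefs) (B : {set 'I_N}) : rat :=
  1 - \prod_(j in B) (1 - w j).

Definition is_policy (k : nat) (A : {set 'I_N}) (f : obs -> {set 'I_N}) : Prop :=
  #|A| = k /\ forall o, #|f o| = k.

Definition value (p01 p11 : rat) (w : beliefs) (A : {set 'I_N})
  (f : obs -> {set 'I_N}) : rat :=
  \sum_(s : state) prob_state w s *
     ((([exists i in A, s i]) : bool)%:R
      + exp_reward (update p01 p11 w A s) (f (observe A s))).

Definition optimal (k : nat) (p01 p11 : rat) (w : beliefs) (A : {set 'I_N})
  (f : obs -> {set 'I_N}) : Prop :=
  is_policy k A f /\
  forall A' f', is_policy k A' f' -> value p01 p11 w A' f' <= value p01 p11 w A f.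

Definition topk (k : nat) (w : beliefs) (B : {set 'I_N}) : Prop :=
  #|B| = k /\ forall i j, i \in B -> j \notin B -> w j <= w i.

Definition topk_rule (k : nat) (p01 p11 : rat) (w : beliefs) (A : {set 'I_N})
  (f : obs -> {set 'I_N}) : Prop :=
  (forall o, #|f o| = k) /\
  forall s : state, topk k (update p01 p11 w A s) (f (observe A s)).

Definition myopic (k : nat) (p01 p11 : rat) (w : beliefs) (A : {set 'I_N})
  (f : obs -> {set 'I_N}) : Prop :=
  topk k w A /\ topk_rule k p01 p11 w A f.

End OSA.

(* The instance: N = 6, channels 1..6 are ordinals 0..5. *)
Definition ch (i : nat) : 'I_6 := inord i.-1.
Definition w0 : 'I_6 -> rat :=
  fun i => nth 0 [:: 99/100; 1/2; 4/10; 39/100; 1/4; 1/4] i.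
Definition p11_0 : rat := 3/10.
Definition p01_0 : rat := 1/2.
Definition A124 : {set 'I_6} := [set ch 1; ch 2; ch 4].
Definition A123 : {set 'I_6} := [set ch 1; ch 2; ch 3].

(* Main.v *)
Require Import Defs.
From HB Require Import structures.
From Stdlib Require Import NArith PArith Nnat Lia.
From mathcomp Require Import all_boot all_order all_algebra.
Import Order.TTheory GRing.Theory Num.Theory.
Set Implicit Arguments. Unset Strict Implicit. Unset Printing Implicit Defensive.
Local Open Scope ring_scope.

Inductive ex := EC (n : nat) | EAdd (a b : ex) | EMul (a b : ex) | ESub (a b : ex) | EInv (a : ex).

Fixpoint den (e : ex) : rat :=
  match e with
  | EC n => n%:R
  | EAdd a b => den a + den b
  | EMul a b => den a * den b
  | ESub a b => den a - den b
  | EInv a => (den a)^-1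
  end.

Definition qv := (N * positive)%type.
Definition phi (q : qv) : rat := (N.to_nat q.1)%:R / (Pos.to_nat q.2)%:R.

Fixpoint ev (e : ex) : option qv :=
  match e with
  | EC n => Some (N.of_nat n, 1%positive)
  | EAdd a b => match ev a, ev b with
      | Some (n1,d1), Some (n2,d2) => Some (N.add (N.mul n1 (Npos d2)) (N.mul n2 (Npos d1)), Pos.mul d1 d2)
      | _, _ => None end
  | EMul a b => match ev a, ev b with
      | Some (n1,d1), Some (n2,d2) => Some (N.mul n1 n2, Pos.mul d1 d2)
      | _, _ => None end
  | ESub a b => match ev a, ev b with
      | Some (n1,d1), Some (n2,d2) =>
          if N.leb (N.mul n2 (Npos d1)) (N.mul n1 (Npos d2))
          then Some (N.sub (N.mul n1 (Npos d2)) (N.mul n2 (Npos d1)), Pos.mul d1 d2) else None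
      | _, _ => None end
  | EInv a => match ev a with
      | Some (Npos n, d) => Some (Npos d, n)
      | _ => None end
  end.

Lemma pos_nz (p : positive) : (Pos.to_nat p)%:R != 0 :> rat.
Proof. rewrite pnatr_eq0; apply/eqP; have := Pos2Nat.is_pos p; lia. Qed.

Lemma NtoS (n : N) (p : positive) : N.to_nat (N.mul n (Npos p)) = (N.to_nat n * Pos.to_nat p)%N.
Proof. rewrite N2Nat.inj_mul; congr (_ * _)%N. Qed.

Lemma ev_sound e q : ev e = Some q -> den e = phi q.
Proof.
elim: e q => [n|a iha b ihb|a iha b ihb|a iha b ihb|a iha] q /=.
- move=> [<-]; rewrite /phi /= Nat2N.id divr1 //.
- case: (ev a) iha => [[n1 d1]|//] iha; case: (ev b) ihb => [[n2 d2]|//] ihb [<-].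
  rewrite (iha _ erefl) (ihb _ erefl) /phi /= addf_div ?pos_nz //.
  rewrite N2Nat.inj_add !NtoS Pos2Nat.inj_mul !natrD !natrM //.
- case: (ev a) iha => [[n1 d1]|//] iha; case: (ev b) ihb => [[n2 d2]|//] ihb [<-].
  rewrite (iha _ erefl) (ihb _ erefl) /phi /= mulf_div.
  rewrite N2Nat.inj_mul Pos2Nat.inj_mul !natrM //.
- case: (ev a) iha => [[n1 d1]|//] iha; case: (ev b) ihb => [[n2 d2]|//] ihb.
  case: ifP => // hle [<-].
  rewrite (iha _ erefl) (ihb _ erefl) /phi /=.
  move/N.leb_le: hle => hle.
  have hle' : (N.to_nat n2 * Pos.to_nat d1 <= N.to_nat n1 * Pos.to_nat d2)%N.
    by apply/ssrnat.leP; rewrite -!NtoS; lia.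
  rewrite N2Nat.inj_sub !NtoS Pos2Nat.inj_mul natrB // !natrM.
  by rewrite -mulNr addf_div ?pos_nz // mulNr.
- case: (ev a) iha => [[[|n] d]|//] iha // [<-].
  rewrite (iha _ erefl) /phi /= invf_div //.
Qed.
Definition ltb_ev e1 e2 := match ev e1, ev e2 with
  | Some (n1,d1), Some (n2,d2) => N.ltb (N.mul n1 (Npos d2)) (N.mul n2 (Npos d1))
  | _, _ => false end.

Lemma pos_gt0 (p : positive) : 0 < (Pos.to_nat p)%:R :> rat.
Proof. rewrite ltr0n; apply/ssrnat.ltP; have := Pos2Nat.is_pos p; lia. Qed.

Lemma ltb_ev_sound e1 e2 : ltb_ev e1 e2 = true -> den e1 < den e2.
Proof.
rewrite /ltb_ev; case E1: (ev e1) => [[n1 d1]|//]; case E2: (ev e2) => [[n2 d2]|//].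
move=> /N.ltb_lt H.
rewrite (ev_sound E1) (ev_sound E2) /phi /=.
rewrite ltr_pdivrMr ?pos_gt0 // mulrAC ltr_pdivlMr ?pos_gt0 // -!natrM ltr_nat.
apply/ssrnat.ltP; rewrite -!NtoS; lia.
Qed.

Ltac reify t :=
  lazymatch t with
  | @Algebra.add _ ?a (@Algebra.opp _ ?b) => let ra := reify a in let rb := reify b in constr:(ESub ra rb)
  | @Algebra.add _ ?a ?b => let ra := reify a in let rb := reify b in constr:(EAdd ra rb)
  | @GRing.mul _ ?a ?b => let ra := reify a in let rb := reify b in constr:(EMul ra rb)
  | @GRing.inv _ ?a => let ra := reify a in constr:(EInv ra)
  | @Algebra.natmul _ (GRing.one _) ?n => constr:(EC n)
  | GRing.one _ => constr:(EC 1)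
  | @Algebra.zero _ => constr:(EC 0)
  | _ => fail 100 "reify: unknown term" t
  end.

Ltac prove_lt :=
  lazymatch goal with
  | |- is_true (@Order.lt _ _ ?a ?b) =>
    let ra := reify a in let rb := reify b in
    change (den ra < den rb); apply: ltb_ev_sound; vm_compute; reflexivity
  end.


Definition ordered (T : finType) (u : T -> rat) (B : {set T}) :=
  forall i j, i \in B -> j \notin B -> u j <= u i.

Lemma topk_prod (T : finType) (u : T -> rat) (g : rat -> rat) (B C : {set T}) :
  #|B| = #|C| -> ordered u B -> ordered u C ->
  \prod_(j in B) g (u j) = \prod_(j in C) g (u j).
Proof.
move=> hc hB.
have [m] := ubnP #|C :\: B|; elim: m C hc => // m IH C hc ltm hC.
have [/eqP e0|/set0Pn [j hj]] := boolP (C :\: B == set0).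
  have sCB : C \subset B by rewrite -setD_eq0 e0.
  have [_ h] := subset_leqif_cards sCB; move: h; rewrite hc eqxx.
  by move/esym/eqP => ->.
have : (0 < #|B :\: C|)%N.
  rewrite cardsD setIC hc -cardsD; by apply/card_gt0P; exists j.
move/card_gt0P => [i hi].
move: hi hj; rewrite !inE => /andP [iC iB] /andP [jB jC].
have e : u i = u j.
  by apply/eqP; rewrite eq_le (hC j i jC iC) (hB i j iB jB).
set C' := i |: (C :\ j).
have iC' : i \notin C :\ j by rewrite !inE (negbTE iC) andbF.
have hc' : #|C'| = #|C|.
  rewrite cardsU1 iC' (cardsD1 j C) jC //.
have hC' : ordered u C'.
  move=> x y; rewrite !inE => /orP [/eqP ->|/andP [xj xC]].
    rewrite negb_or => /andP [yi]; rewrite negb_and negbK => /orP [/eqP ->|yC].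
      by rewrite e.
    by rewrite e hC.
  rewrite negb_or negb_and negbK => /andP [yi /orP [/eqP ->|yC]].
    by rewrite -e hC.
  by rewrite hC.
have -> : \prod_(j0 in C) g (u j0) = \prod_(j0 in C') g (u j0).
  rewrite /C' big_setU1 //= (bigD1 j jC) /=; congr (_ * _); first by rewrite e.
  by apply: eq_bigl => x; rewrite !inE andbC.
apply: IH; rewrite ?hc' //.
rewrite -ltnS; apply: leq_trans ltm; rewrite ltnS.
rewrite (cardsD1 j (C :\: B)) !inE jC jB /= add1n ltnS.
apply: subset_leq_card; apply/subsetP => x; rewrite !inE.
move=> /andP [xB /orP [/eqP xi|/andP [xj xC]]].
  by move: xB; rewrite xi iB.
by rewrite xj xC xB.
Qed.

Definition o0 : 'I_6 := @Ordinal 6 0 isT.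
Definition o1 : 'I_6 := @Ordinal 6 1 isT.
Definition o2 : 'I_6 := @Ordinal 6 2 isT.
Definition o3 : 'I_6 := @Ordinal 6 3 isT.
Definition o4 : 'I_6 := @Ordinal 6 4 isT.
Definition o5 : 'I_6 := @Ordinal 6 5 isT.

Lemma ord6 (j : 'I_6) : j = o0 \/ j = o1 \/ j = o2 \/ j = o3 \/ j = o4 \/ j = o5.
Proof.
case: j => [[|[|[|[|[|[|m]]]]]] H] //.
- by left; apply: val_inj.
- by right; left; apply: val_inj.
- by do 2 right; left; apply: val_inj.
- by do 3 right; left; apply: val_inj.
- by do 4 right; left; apply: val_inj.
- by do 5 right; apply: val_inj.
Qed.

Lemma chE1 : ch 1 = o0. Proof. by apply: val_inj; rewrite /= inordK. Qed.
Lemma chE2 : ch 2 = o1. Proof. by apply: val_inj; rewrite /= inordK. Qed.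
Lemma chE3 : ch 3 = o2. Proof. by apply: val_inj; rewrite /= inordK. Qed.
Lemma chE4 : ch 4 = o3. Proof. by apply: val_inj; rewrite /= inordK. Qed.

Lemma A124E : A124 = [set o0; o1; o3].
Proof. by rewrite /A124 chE1 chE2 chE4. Qed.
Lemma A123E : A123 = [set o0; o1; o2].
Proof. by rewrite /A123 chE1 chE2 chE3. Qed.

Definition B124 (b0 b1 b3 : bool) : {set 'I_6} :=
  match b0, b1, b3 with
  | true, true, true => [set o2; o4; o5]
  | true, true, false => [set o3; o4; o5]
  | true, false, true => [set o1; o4; o5]
  | true, false, false => [set o1; o3; o4]
  | false, true, true => [set o0; o4; o5]
  | false, true, false => [set o0; o3; o4]
  | false, false, true => [set o0; o1; o4]
  | false, false, false => [set o0; o1; o3]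
  end.

Ltac ord_cases i := case: (ord6 i) => [->|[->|[->|[->|[->|->]]]]].

Definition T6 := (bool * (bool * (bool * (bool * (bool * bool)))))%type.
Definition e (x : T6) : state 6 :=
  let: (b0, (b1, (b2, (b3, (b4, b5))))) := x in
  [ffun i : 'I_6 => nth false [:: b0; b1; b2; b3; b4; b5] i].
Definition d (s : state 6) : T6 := (s o0, (s o1, (s o2, (s o3, (s o4, s o5))))).

Lemma sum_state (F : state 6 -> rat) : \sum_(s : state 6) F s = \sum_(x : T6) F (e x).
Proof.
rewrite (reindex e) //; exists d.
  by case=> b0 [b1 [b2 [b3 [b4 b5]]]]; rewrite /d /e !ffunE.
by move=> s _; apply/ffunP => i; rewrite ffunE; ord_cases i.
Qed.

Lemma sum_pair (J : finType) (G : bool * J -> rat) :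
  \sum_(p : bool * J) G p = \sum_(y : J) G (true, y) + \sum_(y : J) G (false, y).
Proof.
transitivity (\sum_(p : bool * J) (fun b y => G (b, y)) p.1 p.2).
  by apply: eq_bigr; case.
by rewrite -(pair_bigA _ (fun b y => G (b, y))) big_bool.
Qed.

Definition wn (k : nat) : rat := nth 0 [:: 99/100; 1/2; 4/10; 39/100; 1/4; 1/4] k.
Definition fac (b : bool) (k : nat) : rat := if b then wn k else 1 - wn k.
Definition Pst (b0 b1 b2 b3 b4 b5 : bool) : rat :=
  fac b0 0 * (fac b1 1 * (fac b2 2 * (fac b3 3 * (fac b4 4 * (fac b5 5 * 1))))).

Lemma prob_e b0 b1 b2 b3 b4 b5 :
  prob_state w0 (e (b0, (b1, (b2, (b3, (b4, b5)))))) = Pst b0 b1 b2 b3 b4 b5.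
Proof. by rewrite /prob_state !big_ord_recl big_ord0 !ffunE. Qed.

Lemma card3 (a b c : 'I_6) : a != b -> a != c -> b != c -> #|[set a; b; c]| = 3.
Proof.
move=> ab ac bc; rewrite -setUA !cardsU1 cards1 !inE.
by rewrite (negbTE ab) (negbTE ac) (negbTE bc).
Qed.

Lemma topk124 (s : state 6) :
  topk 3 (update p01_0 p11_0 w0 A124 s) (B124 (s o0) (s o1) (s o3)).
Proof.
rewrite A124E; case E0: (s o0); case E1: (s o1); case E3: (s o3); rewrite /B124;
  (split; [by rewrite card3|]); move=> i j;
  ord_cases i; ord_cases j; rewrite /update !inE ?E0 ?E1 ?E3 /=;
  vm_compute; try reflexivity; try discriminate.
Qed.

Lemma ex3 (a b c : 'I_6) (P : pred 'I_6) :
  [exists i in [set a; b; c], P i] = [|| P a, P b | P c].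
Proof.
apply/existsP/or3P => [[i /andP []]|].
  by rewrite !inE => /orP [/orP [/eqP->|/eqP->]|/eqP->] H; [apply: Or31|apply: Or32|apply: Or33].
by case=> H; [exists a|exists b|exists c]; rewrite !inE eqxx ?orbT H.
Qed.

Lemma prod3 (a b c : 'I_6) (F : 'I_6 -> rat) : a != b -> a != c -> b != c ->
  \prod_(j in [set a; b; c]) F j = F a * (F b * F c).
Proof.
move=> ab ac bc; rewrite -setUA big_setU1 ?inE ?negb_or ?ab ?ac //.
by rewrite big_setU1 ?inE ?bc // big_set1.
Qed.

Definition Fsum (A : {set 'I_6}) (B : state 6 -> {set 'I_6}) (s : state 6) : rat :=
  prob_state w0 s * ((([exists i in A, s i]) : bool)%:R
                      + exp_reward (update p01_0 p11_0 w0 A s) (B s)).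

Lemma value_eq A f B :
  (forall s, topk 3 (update p01_0 p11_0 w0 A s) (f (observe A s))) ->
  (forall s, topk 3 (update p01_0 p11_0 w0 A s) (B s)) ->
  value p01_0 p11_0 w0 A f = \sum_s Fsum A B s.
Proof.
move=> hf hB; apply: eq_bigr => s _; rewrite /Fsum /exp_reward.
have [c1 o1'] := hf s; have [c2 o2'] := hB s.
by rewrite (topk_prod (fun x => 1 - x) (etrans c1 (esym c2)) o1' o2').
Qed.

Definition q1 (k : nat) : rat := 1 - tau p01_0 p11_0 (wn k).
Definition qp : rat := 1 - p01_0.
Definition Pi124 (b0 b1 b3 : bool) : rat :=
  match b0, b1, b3 with
  | true, true, true => q1 2 * (q1 4 * q1 5)
  | true, true, false => qp * (q1 4 * q1 5)
  | true, false, true => qp * (q1 4 * q1 5)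
  | true, false, false => qp * (qp * q1 4)
  | false, true, true => qp * (q1 4 * q1 5)
  | false, true, false => qp * (qp * q1 4)
  | false, false, true => qp * (qp * q1 4)
  | false, false, false => qp * (qp * qp)
  end.

Definition B124f (s : state 6) := B124 (s o0) (s o1) (s o3).

Lemma F124_e b0 b1 b2 b3 b4 b5 :
  Fsum A124 B124f (e (b0, (b1, (b2, (b3, (b4, b5)))))) =
  Pst b0 b1 b2 b3 b4 b5 * (([|| b0, b1 | b3] : bool)%:R + (1 - Pi124 b0 b1 b3)).
Proof.
rewrite /Fsum prob_e A124E ex3 /B124f !ffunE /=.
by case: b0; case: b1; case: b3; rewrite /exp_reward /B124 prod3 // /update !inE !ffunE.
Qed.

Definition B123 (b0 b1 b2 : bool) : {set 'I_6} :=
  match b0, b1, b2 with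
  | true, true, true => [set o3; o4; o5]
  | true, true, false => [set o2; o4; o5]
  | true, false, true => [set o1; o4; o5]
  | true, false, false => [set o1; o2; o4]
  | false, true, true => [set o0; o4; o5]
  | false, true, false => [set o0; o2; o4]
  | false, false, true => [set o0; o1; o4]
  | false, false, false => [set o0; o1; o2]
  end.
Definition B123f (s : state 6) := B123 (s o0) (s o1) (s o2).

Definition Pi123 (b0 b1 b2 : bool) : rat :=
  match b0, b1, b2 with
  | true, true, true => q1 3 * (q1 4 * q1 5)
  | true, true, false => qp * (q1 4 * q1 5)
  | true, false, true => qp * (q1 4 * q1 5)
  | true, false, false => qp * (qp * q1 4)
  | false, true, true => qp * (q1 4 * q1 5)
  | false, true, false => qp * (qp * q1 4)
  | false, false, true => qp * (qp * q1 4)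
  | false, false, false => qp * (qp * qp)
  end.

Lemma F123_e b0 b1 b2 b3 b4 b5 :
  Fsum A123 B123f (e (b0, (b1, (b2, (b3, (b4, b5)))))) =
  Pst b0 b1 b2 b3 b4 b5 * (([|| b0, b1 | b2] : bool)%:R + (1 - Pi123 b0 b1 b2)).
Proof.
rewrite /Fsum prob_e A123E ex3 /B123f !ffunE /=.
by case: b0; case: b1; case: b2; rewrite /exp_reward /B123 prod3 // /update !inE !ffunE.
Qed.

Lemma topk123 (s : state 6) :
  topk 3 (update p01_0 p11_0 w0 A123 s) (B123f s).
Proof.
rewrite /B123f A123E; case E0: (s o0); case E1: (s o1); case E2: (s o2); rewrite /B123;
  (split; [by rewrite card3|]); move=> i j;
  ord_cases i; ord_cases j; rewrite /update !inE ?E0 ?E1 ?E2 /=;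
  vm_compute; try reflexivity; try discriminate.
Qed.

Lemma topk124' (s : state 6) :
  topk 3 (update p01_0 p11_0 w0 A124 s) (B124f s).
Proof. exact: topk124. Qed.

Lemma sum_bool (G : bool -> rat) : \sum_(b : bool) G b = G true + G false.
Proof. exact: big_bool. Qed.

Lemma expand (F : state 6 -> rat) : \sum_s F s =
  \sum_(x : T6) F (e x).
Proof. exact: sum_state. Qed.

Lemma key f g :
  (forall s, topk 3 (update p01_0 p11_0 w0 A124 s) (f (observe A124 s))) ->
  (forall s, topk 3 (update p01_0 p11_0 w0 A123 s) (g (observe A123 s))) ->
  value p01_0 p11_0 w0 A123 g < value p01_0 p11_0 w0 A124 f.
Proof.
move=> hf hg.
rewrite (value_eq hf topk124') (value_eq hg topk123) !sum_state.
rewrite !sum_pair !sum_bool.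
rewrite !F124_e !F123_e.
cbv beta iota zeta delta [Pst fac wn Pi124 Pi123 q1 qp tau p01_0 p11_0 nth orb nat_of_bool].
prove_lt.
Qed.

Lemma myopic_A (A : {set 'I_6}) : topk 3 w0 A -> A = A123.
Proof.
move=> [hc hA].
have S3 : #|[set o0; o1; o2]| = 3 by rewrite card3.
have mem : forall x, x \in [set o0; o1; o2] -> x \in A.
  move=> x hx; apply/negPn/negP => xA.
  have sub : A \subset [set o0; o1; o2] :\ x.
    apply/subsetP => i iA; have le := hA i x iA xA.
    rewrite in_setD1; apply/andP; split.
      by apply/negP => /eqP ix; move: xA; rewrite -ix iA.
    move: hx le; rewrite !inE.
    case: (ord6 x) => [->|[->|[->|[->|[->|->]]]]];
    case: (ord6 i) => [->|[->|[->|[->|[->|->]]]]]; vm_compute; try reflexivity; try discriminate.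
  have h2 : #|[set o0; o1; o2] :\ x| = 2.
    by have := cardsD1 x [set o0; o1; o2]; rewrite hx S3 add1n => -[<-].
  by have := subset_leq_card sub; rewrite hc h2.
have sub : [set o0; o1; o2] \subset A by apply/subsetP.
have [_ h] := subset_leqif_cards sub; move: h; rewrite hc S3 eqxx.
by move/esym/eqP => <-; rewrite A123E.
Qed.

Definition f0 (o : obs 6) : {set 'I_6} :=
  B124 (o o0 == Some true) (o o1 == Some true) (o o3 == Some true).

Lemma f0_obs s : f0 (observe A124 s) = B124f s.
Proof.
rewrite /f0 /B124f /observe A124E !ffunE !inE /=.
by case: (s o0); case: (s o1); case: (s o3).
Qed.

Theorem mainTheorem5 :
  (forall f g : obs 6 -> {set 'I_6},
     topk_rule 3 p01_0 p11_0 w0 A124 f ->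
     myopic 3 p01_0 p11_0 w0 A123 g ->
     value p01_0 p11_0 w0 A123 g < value p01_0 p11_0 w0 A124 f)
  /\ (forall (A : {set 'I_6}) (g : obs 6 -> {set 'I_6}),
        myopic 3 p01_0 p11_0 w0 A g -> ~ optimal 3 p01_0 p11_0 w0 A g).
Proof.
split.
  by move=> f g [_ hf] [_ [_ hg]]; apply: key.
move=> A g [hA [_ hg]] [_ hopt].
have eA := myopic_A hA; subst A.
have pol : is_policy 3 A124 f0.
  split; first by rewrite A124E card3.
  by move=> o; rewrite /f0; case: (o o0 == Some true); case: (o o1 == Some true);
     case: (o o3 == Some true); rewrite /B124 card3.
have := hopt _ _ pol.
have lt : value p01_0 p11_0 w0 A123 g < value p01_0 p11_0 w0 A124 f0.
  by apply: key => // s; rewrite f0_obs; exact: topk124'.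
by rewrite leNgt lt.
Qed.
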